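(* For every prime power $q$ and integer $n\geq 2$, the design of points and hyperplanes of $\mathrm{PG}(n,q)$ is additive under $\mathrm{EA}(q^{n+1})$. In particular, the desarguesian projective plane of order $q$ is additive under $\mathrm{EA}(q^3)$.
   Context: $\mathrm{PG}(n,q)$ is the $n$-dimensional projective geometry over the finite field $\mathbb{F}_q$; its point-hyperplane design has the points of $\mathrm{PG}(n,q)$ as points and the hyperplanes (as sets of points) as blocks. $\mathrm{EA}(q^{n+1})$ denotes the elementary abelian group of order $q^{n+1}$. A design $(V,\mathscr B)$ is additive under an abelian group $G$ if there is an injective map $f:V\to G$ such that $\sum_{x\in B}f(x)=0$ for every block $B\in\mathscr B$. *)

(* Defs.v *)
From HB Require Import structures.
From mathcomp Require Import all_boot all_order all_algebra all_fingroup all_field.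
Set Implicit Arguments. Unset Strict Implicit. Unset Printing Implicit Defensive.
Import GRing.Theory.
Local Open Scope ring_scope.

Definition additive_design (V : finType) (B : {set {set V}}) (G : zmodType) : Prop :=
  exists f : V -> G, injective f /\ (forall b, b \in B -> \sum_(x in b) f x = 0).

(* Subspaces of F^(n+1) (row vectors) are represented canonically by square
   matrices M with <<M>> = M (their row space). *)
Definition PGpoint (F : finFieldType) (n : nat) :=
  { X : 'M[F]_(n.+1) | (\rank X == 1%N) && (<<X>>%MS == X) }.
Definition PGhyperplane (F : finFieldType) (n : nat) :=
  { H : 'M[F]_(n.+1) | (\rank H == n) && (<<H>>%MS == H) }.

Definition PG_hyperplane_blocks (F : finFieldType) (n : nat) : {set {set PGpoint F n}} :=
  [set [set P : PGpoint F n | (val P <= val H)%MS] | H : PGhyperplane F n].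

Definition elementary_abelian_of_order (G : finZmodType) (m : nat) : Prop :=
  #|G| = m /\ exists p : nat, prime p /\ forall x : G, x *+ p = 0.

(* Main.v *)
Require Import Defs.
From HB Require Import structures.
From mathcomp Require Import all_boot all_order all_algebra all_fingroup all_solvable all_field.
Set Implicit Arguments. Unset Strict Implicit. Unset Printing Implicit Defensive.
Import GRing.Theory.
Local Open Scope ring_scope.

Lemma ext_exists (F : finFieldType) k : (0 < k)%N ->
  {L : fieldExtType F | #|finvect_type L| = (#|F| ^ k)%N}.
Proof.
move=> k_gt0; pose m := (#|F| ^ k)%N.
have [p pr_p pcharFp] := finPcharP F.
have F_gt1 := finNzRing_gt1 F.
have m_gt1: (m > 1)%N by rewrite /m (ltn_exp2l 0).
have m_gt0 := ltnW m_gt1; have m1_gt0: (m.-1 > 0)%N by rewrite -ltnS prednK.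
pose q (R : nzRingType) : {poly R} := 'X^m - 'X.
have Dq R: q R = ('X^(m.-1) - 1) * ('X - 0).
  by rewrite subr0 mulrBl mul1r -exprSr prednK.
have /FinSplittingFieldFor[/= L splitLq]: q F != 0.
  by rewrite Dq monic_neq0 ?rpredM ?monicXsubC ?monicXnsubC.
rewrite rmorphB rmorphXn /= map_polyX -/(q L) in splitLq.
have pcharL: p \in [pchar L] by rewrite pchar_lalg.
exists L.
pose Fm := FinFieldExtType L.
have /finField_galois_generator[/= a _ Da]: (1 <= {:L})%VS by apply: sub1v.
pose Em := fixedSpace (a ^+ k)%g; rewrite dimv1 expn1 in Da.
have{splitLq} [zs DqL defL] := splitLq.
have m0 : m%:R = 0 :> L.
  rewrite /m (card_pprimeChar pcharFp) -expnM natrX (pcharf0 pcharL) expr0n.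
  rewrite muln_eq0 (gtn_eqF k_gt0) orbF; case: eqP => // e0.
  by move: F_gt1; rewrite (card_pprimeChar pcharFp) e0.
have Uzs: uniq zs.
  rewrite -separable_prod_XsubC -(eqp_separable DqL) Dq separable_root andbC.
  rewrite /root !hornerE subr_eq0 eq_sym expr0n gtn_eqF ?oner_eq0 //=.
  rewrite cyclotomic.separable_Xn_sub_1 // -subn1 natrB // subr_eq0.
  by rewrite m0 eq_sym oner_eq0.
suffices /eq_card->: Fm =i zs.
  apply: succn_inj; rewrite (card_uniqP _) //= -(size_prod_XsubC _ id).
  by rewrite -(eqp_size DqL) size_polyDl size_polyXn // size_polyN size_polyX.
have in_zs: zs =i Em.
  move=> z; rewrite -root_prod_XsubC -(eqp_root DqL) (sameP fixedSpaceP eqP).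
  rewrite /root !hornerE subr_eq0 /= /m; congr (_ == z).
  elim: (k) => [|i IHi]; first by rewrite gal_id.
  by rewrite expgSr expnSr exprM IHi galM ?Da ?memvf.
suffices defEm: Em = {:L}%VS by move=> z; rewrite in_zs defEm memvf.
apply/eqP; rewrite eqEsubv subvf -defL -[Em]subfield_closed agenvS //.
by rewrite subv_add sub1v; apply/span_subvP=> z; rewrite in_zs.
Qed.

Lemma cardF0 (F : finFieldType) : (#|F|%:R : F) = 0.
Proof.
have [p pr_p pcharFp] := finPcharP F.
have F_gt1 := finNzRing_gt1 F.
rewrite (card_pprimeChar pcharFp) natrX (pcharf0 pcharFp) expr0n.
case: eqP => // e0.
by move: F_gt1; rewrite (card_pprimeChar pcharFp) e0.
Qed.

Lemma sum_pow_lt (F : finFieldType) j : (j < #|F|.-1)%N ->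
  \sum_(t : F) t ^+ j = 0.
Proof.
move=> ltj; case: j ltj => [_|j ltj].
  by rewrite (eq_bigr (fun _ => 1)) ?sumr_const ?cardF0 // => t _; rewrite expr0.
have [a /andP[a0 aj]|H] := pickP [pred a : F | (a != 0) && (a ^+ j.+1 != 1)]; last first.
  pose pp : {poly F} := 'X^(j.+1) - 1.
  have pp0 : pp != 0 by rewrite /pp -size_poly_eq0 size_polyDl ?size_polyXn ?size_polyN ?size_poly1.
  have Hall : all (root pp) (enum [pred x : F | x != 0]).
    apply/allP => x; rewrite mem_enum inE => x0; rewrite /root !hornerE subr_eq0.
    by have := H x; rewrite /= x0 /= => /negbFE.
  have := max_poly_roots pp0 Hall (enum_uniq _).
  by rewrite -cardE cardC1 /pp size_polyDl ?size_polyXn ?size_polyN ?size_poly1 // ltnS leqNgt ltj.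
have: \sum_(t : F) t ^+ j.+1 = a ^+ j.+1 * \sum_(t : F) t ^+ j.+1.
  rewrite mulr_sumr (reindex_inj (mulfI a0)) /=.
  by apply: eq_bigr => t _; rewrite exprMn.
move/eqP; rewrite -subr_eq0 -{1}[\sum_t _]mul1r -mulrBl mulf_eq0 subr_eq0 eq_sym.
by rewrite (negbTE aj) /= => /eqP.
Qed.

Lemma sum_pow_last (F : finFieldType) : \sum_(t : F) t ^+ #|F|.-1 = -1.
Proof.
have F_gt1 := finNzRing_gt1 F.
have N_gt0 : (0 < #|F|.-1)%N by rewrite -ltnS prednK // ltnW.
rewrite (bigD1 0) //= expr0n (gtn_eqF N_gt0) add0r.
rewrite (eq_bigr (fun _ => 1)) ?sumr_const.
  rewrite cardC1.
  have : ((#|F|.-1).+1%:R : F) = 0 by rewrite prednK ?cardF0 // ltnW.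
  by rewrite -natr1 => /eqP; rewrite addr_eq0 => /eqP.
move=> t t0; have := expf_card t.
rewrite -(prednK (ltnW F_gt1)) exprS => /eqP.
rewrite -{3}[t]mulr1 -subr_eq0 -mulrBr mulf_eq0 (negbTE t0) /= subr_eq0.
by move/eqP.
Qed.

Lemma sum_line (F : finFieldType) (L : fieldExtType F) (a b : L) :
  \sum_(t : F) (t%:A * a + b) ^+ (#|F|.-1) = - a ^+ (#|F|.-1).
Proof.
have F_gt1 := finNzRing_gt1 F.
set N := #|F|.-1.
have N_gt0 : (0 < N)%N by rewrite /N -ltnS prednK // ltnW.
under eq_bigr do rewrite exprDn.
rewrite exchange_big big_ord_recl /= [X in _ + X]big1 ?addr0.
  under eq_bigr do rewrite bin0 mulr1n expr0 mulr1 subn0 exprMn -in_algE -rmorphXn /= ?in_algE.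
  by rewrite -mulr_suml -scaler_suml sum_pow_last scaleN1r mulN1r.
move=> i _; rewrite sumrMnl.
under eq_bigr do rewrite exprMn -in_algE -rmorphXn /= ?in_algE -mulrA.
rewrite -mulr_suml -scaler_suml sum_pow_lt ?scale0r ?mul0r ?mul0rn //.
by rewrite /bump /= add1n subnS prednK ?leq_subr // subn_gt0.
Qed.

Lemma sum_space (F : finFieldType) (L : fieldExtType F) N (phi : 'rV[F]_N -> L)
  (phiD : forall u v, phi (u + v) = phi u + phi v)
  (phiZ : forall (t : F) u, phi (t *: u) = t%:A * phi u) r (B : 'M[F]_(r, N)) :
  (2 <= r)%N -> \sum_(y : 'rV[F]_r) phi (y *m B) ^+ #|F|.-1 = 0.
Proof.
case: r B => [|[|r]] B // _.
have inner : forall (B1 : 'rV[F]_N) (w : L),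
    \sum_(u : 'rV[F]_1) (phi (u *m B1) + w) ^+ #|F|.-1 = - phi B1 ^+ #|F|.-1.
  move=> B1 w.
  rewrite (reindex (fun t : F => (const_mx t : 'rV[F]_1))) /=; last first.
    apply: onW_bij; exists (fun u : 'rV[F]_1 => u 0 0) => [t|u]; first by rewrite mxE.
    by apply/rowP => i; rewrite mxE (ord1 i).
  have E t : (const_mx t : 'rV[F]_1) *m B1 = t *: B1.
    by rewrite [const_mx t]mx11_scalar mul_scalar_mx mxE.
  under eq_bigr do rewrite E phiZ.
  exact: sum_line.
rewrite (reindex (fun p : 'rV[F]_1 * 'rV[F]_(r.+1) => (row_mx p.1 p.2 : 'rV[F]_(r.+2)))) /=; last first.
  apply: onW_bij.
  exists (fun y : 'rV[F]_(r.+2) => (lsubmx (y : 'rV[F]_(1 + r.+1)), rsubmx (y : 'rV[F]_(1 + r.+1)))).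
    by move=> [u v] /=; rewrite row_mxKl row_mxKr.
  by move=> y /=; rewrite hsubmxK.
rewrite -[B](@vsubmxK _ 1 r.+1).
have E : forall (u : 'rV[F]_1) (v : 'rV[F]_(r.+1)),
    (row_mx u v : 'rV[F]_(r.+2)) *m (col_mx (@usubmx _ 1 r.+1 N B) (@dsubmx _ 1 r.+1 N B) : 'M_(r.+2, N))
    = u *m @usubmx _ 1 r.+1 N B + v *m @dsubmx _ 1 r.+1 N B by move=> u v; exact: (@mul_row_col _ 1 1 r.+1 N u v).
under eq_bigr do rewrite E phiD.
rewrite -(pair_big xpredT xpredT (fun u v => (phi (u *m @usubmx _ 1 r.+1 N B) + phi (v *m @dsubmx _ 1 r.+1 N B)) ^+ #|F|.-1)) /=.
rewrite exchange_big /=.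
under eq_bigr do rewrite inner.
rewrite sumr_const card_mx -mulr_natr natrX -(rmorph_nat (in_alg L)) cardF0 rmorph0.
by rewrite expr0n mulr0.
Qed.

Lemma PG_rank (F : finFieldType) n (X : PGpoint F n) : \rank (val X) = 1%N.
Proof. by case: X => X /= /andP[/eqP]. Qed.

Lemma PG_gen (F : finFieldType) n (X : PGpoint F n) : <<val X>>%MS = val X.
Proof. by case: X => X /= /andP[_ /eqP]. Qed.

Definition rep (F : finFieldType) n (X : PGpoint F n) : 'rV[F]_n.+1 :=
  odflt 0 [pick v | (v != 0) && (v <= val X)%MS].

Lemma rep_spec (F : finFieldType) n (X : PGpoint F n) :
  (rep X != 0) && (rep X <= val X)%MS.
Proof.
rewrite /rep; case: pickP => [v -> //|H].
have : val X != 0 by rewrite -mxrank_eq0 PG_rank.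
by case/rowV0Pn => v vX v0; have := H v; rewrite v0 vX.
Qed.

Lemma sub_point (F : finFieldType) n (X : PGpoint F n) (v : 'rV[F]_n.+1) :
  v != 0 -> (v <= val X)%MS -> (v == val X)%MS.
Proof.
move=> v0 vX; rewrite -(mxrank_leqif_eq vX).2.
by rewrite rank_rV v0 PG_rank.
Qed.

Lemma P0_proof (F : finFieldType) n :
  (\rank (<<const_mx 1 : 'rV[F]_n.+1>>%MS) == 1%N) && (<<<<const_mx 1 : 'rV[F]_n.+1>>%MS>>%MS == <<const_mx 1 : 'rV[F]_n.+1>>%MS).
Proof.
have h : const_mx 1 != 0 :> 'rV[F]_n.+1.
  by apply/eqP => /rowP/(_ ord0); rewrite !mxE => /eqP; rewrite oner_eq0.
by rewrite mxrank_gen rank_rV genmx_id eqxx andbT h.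
Qed.

Definition P0 (F : finFieldType) n : PGpoint F n := exist (fun X : 'M[F]_n.+1 => (\rank X == 1%N) && (<<X>>%MS == X)) _ (P0_proof F n).

Definition pt (F : finFieldType) n (v : 'rV[F]_n.+1) : PGpoint F n :=
  insubd (P0 F n) <<v>>%MS.

Lemma val_pt (F : finFieldType) n (v : 'rV[F]_n.+1) : v != 0 -> val (pt v) = <<v>>%MS.
Proof.
move=> v0; rewrite /pt insubdK //.
by rewrite unfold_in /= mxrank_gen rank_rV v0 genmx_id eqxx.
Qed.

Lemma pt_eq (F : finFieldType) n (X : PGpoint F n) (v : 'rV[F]_n.+1) :
  v != 0 -> (pt v == X) = (v <= val X)%MS.
Proof.
move=> v0; rewrite -val_eqE val_pt // -{1}(PG_gen X).
apply/idP/idP => [/eqP/genmxP/andP[] // | vX].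
by apply/eqP/genmxP; apply: sub_point.
Qed.

Lemma pow_unit1 (F : finFieldType) (t : F) : t != 0 -> t ^+ #|F|.-1 = 1.
Proof.
move=> t0; have := expf_card t.
rewrite -(prednK (ltnW (finNzRing_gt1 F))) exprS => /eqP.
rewrite -{3}[t]mulr1 -subr_eq0 -mulrBr mulf_eq0 (negbTE t0) /= subr_eq0.
by move/eqP.
Qed.

Lemma natN1 (F : finFieldType) : ((#|F|.-1)%:R : F) = -1.
Proof.
have F_gt1 := finNzRing_gt1 F.
have : ((#|F|.-1).+1%:R : F) = 0 by rewrite prednK ?cardF0 // ltnW.
by rewrite -natr1 => /eqP; rewrite addr_eq0 => /eqP.
Qed.

Theorem corollary3p2 (F : finFieldType) (n : nat) (G : finZmodType) :
  (2 <= n)%N ->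
  elementary_abelian_of_order G (#|F| ^ n.+1) ->
  additive_design (PG_hyperplane_blocks F n) G.
Proof.
move=> n2 [cardG [p [pr_p Gp]]].
have [L0 cardL] := ext_exists F (ltn0Sn n).
pose Lt := finvect_type L0.
have F_gt1 := finNzRing_gt1 F.
set N' := #|F|.-1.
have N'_gt0 : (0 < N')%N by rewrite /N' -ltnS prednK // ltnW.
have dimL : \dim (fullv : {vspace L0}) = n.+1.
  apply: (expnI F_gt1); rewrite -cardL.
  have := card_vspace (fullv : {vspace Lt}).
  by rewrite card_vspacef.
pose b : n.+1.-tuple L0 := tcast dimL (vbasis fullv).
have fb : free b by rewrite val_tcast; apply: basis_free (vbasisP _).
pose phi (v : 'rV[F]_n.+1) : L0 := \sum_(i < n.+1) v 0 i *: b`_i.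
have phiD u v : phi (u + v) = phi u + phi v.
  by rewrite /phi -big_split; apply: eq_bigr => i _; rewrite mxE scalerDl.
have phiZ (t : F) u : phi (t *: u) = t%:A * phi u.
  rewrite mulr_algl /phi scaler_sumr; apply: eq_bigr => i _.
  by rewrite mxE scalerA.
have phi0 : phi 0 = 0 by rewrite /phi big1 // => i _; rewrite mxE scale0r.
have phi_inj : injective phi.
  move=> u v huv; apply/rowP => i; apply/eqP; rewrite -subr_eq0; apply/eqP.
  have : \sum_(i < n.+1) (u 0 i - v 0 i) *: b`_i = 0.
    rewrite (eq_bigr (fun i => u 0 i *: b`_i - v 0 i *: b`_i)); last by move=> j _; rewrite scalerBl.
    by rewrite sumrB; apply/eqP; rewrite subr_eq0; apply/eqP.
  by move/freeP: fb => H /H ->.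
pose g v := phi v ^+ N'.
have [r pr_r pcharFr] := finPcharP F.
have pcharLr : r \in [pchar (FinFieldExtType L0)] by rewrite pchar_lalg.
have abL : (r.-abelem [set: (FinFieldExtType L0)])%g := fin_ring_pchar_abelem pcharLr.
have abG : (p.-abelem [set: G])%g.
  apply/abelemP => //; split; first exact: FinRing.zmod_abelian.
  by move=> x _; rewrite FinRing.zmodXgE Gp.
have rp : r = p.
  have ntL : [set: (FinFieldExtType L0)] != 1%g.
    by apply/trivgPn; exists (1 : (FinFieldExtType L0)); rewrite ?inE // oner_neq0.
  have [_ rdiv _] := pgroup_pdiv (abelem_pgroup abL) ntL.
  have pG := abelem_pgroup abG.
  rewrite cardsT cardL -cardG -cardsT in rdiv.
  have := pnat_dvd rdiv pG; rewrite pnatE //.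
  by move/eqP.
subst r.
have /isogP [psi injpsi impsi] : ([set: (FinFieldExtType L0)] \isog [set: G])%g.
  by rewrite (isog_abelem_card _ abL) abG !cardsT cardL cardG /=.
have psi_inj : injective psi.
  by move=> x y; move/injmP: injpsi => /(_ x y); rewrite !inE; apply.
have psiD (x y : FinFieldExtType L0) : psi (x + y) = psi x + psi y.
  by have := morphM psi (in_setT x) (in_setT y).
have psi0 : psi 0 = 0 by have := morph1 psi.
have psi_sum (I : finType) (P : pred I) (h : I -> L0) :
    psi (\sum_(i | P i) h i) = \sum_(i | P i) psi (h i).
  by elim/big_rec2: _ => [|i y1 y2 _ <-]; [exact: psi0 | exact: psiD].
have g0 : g 0 = 0 by rewrite /g phi0 expr0n (gtn_eqF N'_gt0).
have ginv (t : F) v : t != 0 -> g (t *: v) = g v.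
  move=> t0; rewrite /g phiZ exprMn -in_algE -rmorphXn pow_unit1 // rmorph1 mul1r.
  by [].
have phinz v : v != 0 -> phi v != 0.
  by move=> v0; apply: contra v0 => /eqP; rewrite -phi0 => /phi_inj ->.
have N'R : (N'%:R : L0) = -1.
  by rewrite -(rmorph_nat (in_alg L0)) natN1 rmorphN1.
exists (fun P : PGpoint F n => psi (g (rep P))); split.
  move=> P Q /psi_inj hg.
  have /andP [rP0 rPX] := rep_spec P.
  have /andP [rQ0 rQX] := rep_spec Q.
  have xn := phinz _ rP0; have yn := phinz _ rQ0.
  have z1 : (phi (rep P) / phi (rep Q)) ^+ N' = 1.
    by rewrite expr_div_n; move: hg; rewrite /g => ->; rewrite divff // expf_neq0.
  have : phi (rep P) / phi (rep Q) \in (1%AS : {subfield L0}).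
    rewrite Fermat's_little_theorem /= dimv1 expn1.
    by rewrite -(prednK (ltnW F_gt1)) exprS -/N' z1 mulr1.
  case/vlineP => t ht.
  have Ht : rep P = t *: rep Q.
    apply: phi_inj; rewrite phiZ -ht divfK //.
  have t0 : t != 0 by apply: contra rP0; rewrite Ht => /eqP ->; rewrite scale0r.
  have E1 : pt (rep P) = P by apply/eqP; rewrite pt_eq.
  have E2 : pt (rep P) = Q by apply/eqP; rewrite pt_eq // Ht scalemx_sub.
  by rewrite -E1 E2.
move=> B /imsetP [H _ ->].
rewrite (eq_bigl (fun P : PGpoint F n => (val P <= val H)%MS)); last by move=> P; rewrite inE.
rewrite -psi_sum.
suff -> : \sum_(P : PGpoint F n | (val P <= val H)%MS) g (rep P) = 0 by exact: psi0.
have cntP (X : PGpoint F n) :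
    \sum_(v : 'rV[F]_n.+1 | (v != 0) && (v <= val X)%MS) g v = - g (rep X).
  have /andP [r0 rX] := rep_spec X.
  have /andP [_ Xr] := sub_point r0 rX.
  transitivity (\sum_(v : 'rV[F]_n.+1 | (v != 0) && (v <= val X)%MS) g (rep X)).
    apply: eq_bigr => v /andP [v0 vX].
    have /sub_rVP [t Ht] := submx_trans vX Xr.
    have t0 : t != 0 by apply: contra v0; rewrite Ht => /eqP ->; rewrite scale0r.
    by rewrite Ht ginv.
  rewrite sumr_const.
  have cnt : #|[pred v : 'rV[F]_n.+1 | (v != 0) && (v <= val X)%MS]| = N'.
    rewrite /N' -(cardC1 (0 : F)).
    have sinj : injective (fun t : F => t *: rep X).
      move=> s t /eqP; rewrite -subr_eq0 -scalerBl scaler_eq0 (negbTE r0) orbF subr_eq0.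
      by move/eqP.
    rewrite -(card_imset (predC1 0) sinj).
    apply: eq_card => v; rewrite inE; apply/idP/imsetP.
      case/andP => v0 vX; have /sub_rVP [t Ht] := submx_trans vX Xr.
      exists t => //; rewrite inE; apply: contra v0; rewrite Ht => /eqP ->.
      by rewrite scale0r.
    case=> t; rewrite inE => t0 ->.
    by rewrite scalemx_sub // scaler_eq0 negb_or t0 r0.
  by rewrite cnt -mulr_natr N'R mulrN1.
have sumH : \sum_(v : 'rV[F]_n.+1 | (v <= val H)%MS) g v = 0.
  have rkH : \rank (val H) = n by case: H => H' /= /andP [/eqP].
  pose Bh := row_base (val H).
  have E : \sum_(v : 'rV[F]_n.+1 | (v <= val H)%MS) g v =
      \sum_(v in [set y *m Bh | y in [set: 'rV[F]_(\rank (val H))]]) g v.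
    apply: eq_bigl => v; apply/idP/imsetP => [vH | [y _ ->]].
      move: vH; rewrite -(eq_row_base (val H)) => /submxP [D ->].
      by exists D; rewrite ?inE.
    by rewrite -(eq_row_base (val H)) submxMl.
  rewrite E big_imset /=; last first.
    by move=> y1 y2 _ _; apply: (row_free_inj (row_base_free _)).
  rewrite (eq_bigl xpredT); last by move=> y; rewrite inE.
  by apply: sum_space => //; rewrite rkH.
have part : \sum_(v : 'rV[F]_n.+1 | (v <= val H)%MS) g v =
    \sum_(P : PGpoint F n | (val P <= val H)%MS) \sum_(v : 'rV[F]_n.+1 | (v != 0) && (v <= val P)%MS) g v.
  rewrite (bigD1 0) ?sub0mx //= g0 add0r.
  rewrite (partition_big (@pt F n) (fun P : PGpoint F n => (val P <= val H)%MS)); last first.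
    by move=> v /andP [vH v0]; rewrite val_pt // genmxE.
  apply: eq_bigr => P PH; apply: eq_bigl => v.
  case v0 : (v != 0); last by rewrite andbF.
  rewrite pt_eq // andbT /=.
  by apply/andb_idl => vP; apply: submx_trans vP PH.
move: sumH; rewrite part (eq_bigr _ (fun P _ => cntP P)) sumrN => /eqP.
by rewrite oppr_eq0 => /eqP.
Qed.
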